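(* Let $(P,\leq,{}',R,0,1)$ be a conditionally operator residuated poset satisfying operator divisibility, and assume $R(x,y)=LU(x',y)$ for all $x,y\in P$. Then $(P,\leq,{}',0,1)$ is a generalized orthomodular poset.
   Context: For a poset $(P,\leq)$ and $A\subseteq P$: $L(A):=\{x\in P\mid x\leq a\text{ for all }a\in A\}$, $U(A):=\{x\in P\mid a\leq x\text{ for all }a\in A\}$; $L(a,b)$ means $L(\{a,b\})$, $L(a,B)$ means $L(\{a\}\cup B)$, $LU(A)=L(U(A))$. An orthoposet is a bounded poset $(P,\leq,{}',0,1)$ with a unary operation $'$ that is an antitone involution ($x''=x$, and $x\leq y\Rightarrow y'\leq x'$) and a complementation ($L(x,x')=\{0\}$, $U(x,x')=\{1\}$). A generalized orthomodular poset is an orthoposet satisfying: for all $x,y$, $x\leq y$ implies $U(y)=U(x,L(x',y))$. A conditionally operator residuated poset is a tuple $(P,\leq,{}',R,0,1)$ where $(P,\leq,0,1)$ is a bounded poset, $'$ is an antitone unary operation ($x\leq y\Rightarrow y'\leq x'$), and $R:P^2\to 2^P$ satisfies for all $x,y,z\in P$: (i) if $x'\leq y$ then $L(x,y)\subseteq L(z)$ implies $L(x)\subseteq R(y,z)$; (ii) if $z\leq y$ then $L(x)\subseteq R(y,z)$ implies $L(x,y)\subseteq L(z)$; (iii) $R(x,0)=L(x')$; (iv) $R(x'',x)=P$. It satisfies operator divisibility if $x\leq y$ implies $L(y,U(R(y,x)))=L(x)$. *)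

(* Defs.v *)
From HB Require Import structures.
From mathcomp Require Import all_boot all_order.
Set Implicit Arguments. Unset Strict Implicit. Unset Printing Implicit Defensive.
Import Order.TTheory.
Local Open Scope order_scope.

Section PosetDefs.
Context {d : Order.disp_t} {P : tbPOrderType d}.

Definition pset := P -> Prop.
Definition psubset (A B : pset) : Prop := forall x, A x -> B x.
Definition pseteq (A B : pset) : Prop := forall x, A x <-> B x.
Definition pfull : pset := fun _ => True.
Definition psingle (a : P) : pset := fun z => z = a.
Definition ppair (a b : P) : pset := fun z => z = a \/ z = b.
Definition paddpt (a : P) (B : pset) : pset := fun z => z = a \/ B z.

Definition Lc (A : pset) : pset := fun x => forall a, A a -> x <= a.
Definition Uc (A : pset) : pset := fun x => forall a, A a -> a <= x.

Definition antitone (c : P -> P) : Prop := forall x y, x <= y -> c y <= c x.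

Definition orthoposet (c : P -> P) : Prop :=
  antitone c /\
  (forall x, c (c x) = x) /\
  (forall x, pseteq (Lc (ppair x (c x))) (psingle \bot)) /\
  (forall x, pseteq (Uc (ppair x (c x))) (psingle \top)).

Definition gen_orthomodular (c : P -> P) : Prop :=
  orthoposet c /\
  (forall x y, x <= y ->
     pseteq (Uc (psingle y)) (Uc (paddpt x (Lc (ppair (c x) y))))).

Definition cond_op_residuated (c : P -> P) (R : P -> P -> pset) : Prop :=
  antitone c /\
  (forall x y z, c x <= y ->
     psubset (Lc (ppair x y)) (Lc (psingle z)) -> psubset (Lc (psingle x)) (R y z)) /\
  (forall x y z, z <= y ->
     psubset (Lc (psingle x)) (R y z) -> psubset (Lc (ppair x y)) (Lc (psingle z))) /\
  (forall x, pseteq (R x \bot) (Lc (psingle (c x)))) /\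
  (forall x, pseteq (R (c (c x)) x) pfull).

Definition op_divisibility (R : P -> P -> pset) : Prop :=
  forall x y, x <= y ->
    pseteq (Lc (paddpt y (Uc (R y x)))) (Lc (psingle x)).

End PosetDefs.

(* Main.v *)
Require Import Defs.
From mathcomp Require Import all_boot all_order.
Import Order.TTheory.
Local Open Scope order_scope.

Theorem mainTheorem2 (d : Order.disp_t) (P : tbPOrderType d)
  (c : P -> P) (R : P -> P -> P -> Prop) :
  cond_op_residuated c R ->
  op_divisibility R ->
  (forall x y, pseteq (R x y) (Lc (Uc (ppair (c x) y)))) ->
  gen_orthomodular c.
Proof.
move=> [anti [Ri [Rii [Riii Riv]]]] div HR.
have Lcomp : forall x w, w <= x -> w <= c x -> w <= \bot.
  move=> x w h1 h2.
  apply: ((div \bot x (le0x _) w).1 _ _ erefl) => a [->|Ua] //.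
  have : R x \bot (c x) by apply: ((Riii x (c x)).2) => b ->.
  by move=> /Ua; apply: le_trans.
have xcc : forall x, x <= c (c x).
  move=> x.
  have H : psubset (Lc (psingle x)) (R (c x) \bot).
    apply: Ri => // w Hw; move=> b ->.
    by apply: Lcomp (Hw x (or_introl erefl)) (Hw _ (or_intror erefl)).
  have := (Riii (c x) x).1 (H x (fun b bx => eq_ind_r (fun t => x <= t) (lexx x) bx)).
  by apply.
have invol : forall x, c (c x) = x.
  move=> x; apply/le_anti; rewrite xcc andbT.
  apply: ((div x (c (c x)) (xcc x) (c (c x))).1 _ _ erefl) => a [->|Ua] //.
  by apply: (Ua); exact: ((Riv x _).2 I).
have Utop : forall x z, x <= z -> c x <= z -> z = \top.
  move=> x z h1 h2; apply/le_anti; rewrite lex1 /=.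
  have := (HR (c (c x)) x \top).1 ((Riv x \top).2 I) z.
  rewrite invol; apply => b [->|->] //.
split; [split; [done|split; [done|split]]|].
- move=> x z; split.
  + move=> Hz; apply/le_anti; rewrite le0x andbT.
    exact: Lcomp (Hz x (or_introl erefl)) (Hz _ (or_intror erefl)).
  + move=> -> b _; exact: le0x.
- move=> x z; split.
  + move=> Hz; exact: Utop (Hz x (or_introl erefl)) (Hz _ (or_intror erefl)).
  + move=> -> b _; exact: lex1.
- move=> x y xy z; split.
  + move=> Hz b [->|Lb]; first by apply: le_trans xy (Hz y erefl).
    exact: le_trans (Lb y (or_intror erefl)) (Hz y erefl).
  + move=> Hz b ->.
    have zx : x <= z by apply: (Hz); left.
    suff : c z <= c y by move/anti; rewrite !invol.
    apply: ((div (c y) (c x) (anti _ _ xy) (c z)).1 _ _ erefl) => a [->|Ua].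
      exact: (anti).
    rewrite -(invol a); apply: (anti).
    apply: (Hz); right => w [->|->].
      apply: (anti); rewrite -[x]invol; apply: (Ua).
      by apply: ((HR _ _ _).2) => u Hu; apply: Hu; left.
    rewrite -[y]invol; apply: (anti); apply: (Ua).
    by apply: ((HR _ _ _).2) => u Hu; apply: Hu; right.
Qed.
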